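(* Let $G=(V=[n],w)$ be a connected loopless weighted graph with $n\ge2$, and let $\gamma=\frac{\max_{1\le i\le n}\mathrm{vol}(i)}{\min_{1\le i\le n}\mathrm{vol}(i)}$. Then for every $0<\varepsilon<1$, $$\frac{\tilde h_G}{h_G}\ \ge\ \Big(1-\frac{2\gamma}{\varepsilon^2 n}\Big)(1-\varepsilon).$$ (Equivalently, since $\tilde h_G=h_{W}$ for the graphon $W$ associated to $G$ by $W(x,y)=w(i,j)$ for $x\in P_i,y\in P_j$, where $P_i$ is the $i$-th interval of the partition of $[0,1]$ into $n$ consecutive intervals of length $1/n$, the same bound holds for $h_W/h_G$.)
   Context: A weighted graph is a pair $(V,w)$ with $V=[n]$ and $w:V\times V\to[0,1]$ symmetric; it is loopless if $w(v,v)=0$ for all $v$. Put $\mathrm{vol}(v)=\sum_{u}w(u,v)$ and $\mathrm{vol}(S)=\sum_{v\in S}\mathrm{vol}(v)$. $G$ is connected if $\sum_{u\in S,v\notin S}w(u,v)>0$ for every $\emptyset\ne S\subsetneq V$. The Cheeger constant is $h_G=\min_{\emptyset\ne S\subsetneq V}\frac{\sum_{u\in S,v\notin S}w(u,v)}{\min\{\mathrm{vol}(S),\mathrm{vol}(V\setminus S)\}}$. A fractional partition of $V$ is a pair $(\rho,\eta)$ of functions $V\to[0,1]$ with $\rho+\eta\equiv1$; $\|\rho\|=\sum_u\rho(u)\mathrm{vol}(u)$, $\|\eta\|=\sum_u\eta(u)\mathrm{vol}(u)$. When both are nonzero, $\tilde h(G;\rho,\eta)=\frac{\sum_{u,v}\rho(u)\eta(v)w(u,v)}{\min\{\|\rho\|,\|\eta\|\}}$;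 the fractional Cheeger constant is $\tilde h_G=\inf\tilde h(G;\rho,\eta)$ over such fractional partitions. For a graphon $W:[0,1]^2\to[0,1]$ (measurable, symmetric), $h_W=\inf_{A:\,0<\mu_L(A)<1}\frac{\int_{A\times A^c}W}{\min\{\int_{A\times I}W,\int_{A^c\times I}W\}}$. *)

(* Defs.v *)
(* classical real numbers. Vertices are 0..n-1 (= [n] shifted). *)
From Stdlib Require Import Reals.
Open Scope R_scope.

Fixpoint sumR (n : nat) (f : nat -> R) : R :=
  match n with O => 0 | S k => sumR k f + f k end.

Fixpoint maxR (k : nat) (f : nat -> R) : R :=
  match k with O => f O | S j => Rmax (maxR j f) (f (S j)) end.
Fixpoint minR (k : nat) (f : nat -> R) : R :=
  match k with O => f O | S j => Rmin (minR j f) (f (S j)) end.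

Definition weighted_graph (n : nat) (w : nat -> nat -> R) : Prop :=
  forall i j, (i < n)%nat -> (j < n)%nat ->
    0 <= w i j <= 1 /\ w i j = w j i.

Definition loopless (n : nat) (w : nat -> nat -> R) : Prop :=
  forall i, (i < n)%nat -> w i i = 0.

Definition vol (n : nat) (w : nat -> nat -> R) (v : nat) : R :=
  sumR n (fun u => w u v).

Definition volS (n : nat) (w : nat -> nat -> R) (S : nat -> bool) : R :=
  sumR n (fun v => if S v then vol n w v else 0).

Definition cut (n : nat) (w : nat -> nat -> R) (S : nat -> bool) : R :=
  sumR n (fun u => sumR n (fun v =>
    if S u then (if S v then 0 else w u v) else 0)).

Definition nonempty_proper (n : nat) (S : nat -> bool) : Prop :=
  (exists i, (i < n)%nat /\ S i = true) /\ (exists i, (i < n)%nat /\ S i = false).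

Definition connected (n : nat) (w : nat -> nat -> R) : Prop :=
  forall S : nat -> bool, nonempty_proper n S -> cut n w S > 0.

Definition is_glb (E : R -> Prop) (m : R) : Prop :=
  (forall x, E x -> m <= x) /\ (forall b, (forall x, E x -> b <= x) -> b <= m).

Definition cheeger_values (n : nat) (w : nat -> nat -> R) (x : R) : Prop :=
  exists S : nat -> bool, nonempty_proper n S /\
    x = cut n w S / Rmin (volS n w S) (volS n w (fun v => negb (S v))).

Definition fnorm (n : nat) (w : nat -> nat -> R) (rho : nat -> R) : R :=
  sumR n (fun u => rho u * vol n w u).

Definition frac_ratio (n : nat) (w : nat -> nat -> R) (rho eta : nat -> R) : R :=
  sumR n (fun u => sumR n (fun v => rho u * eta v * w u v))
  / Rmin (fnorm n w rho) (fnorm n w eta).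

Definition fractional_partition (n : nat) (rho eta : nat -> R) : Prop :=
  forall u, (u < n)%nat ->
    0 <= rho u <= 1 /\ 0 <= eta u <= 1 /\ rho u + eta u = 1.

Definition frac_cheeger_values (n : nat) (w : nat -> nat -> R) (x : R) : Prop :=
  exists rho eta : nat -> R, fractional_partition n rho eta /\
    fnorm n w rho <> 0 /\ fnorm n w eta <> 0 /\ x = frac_ratio n w rho eta.

Definition gamma (n : nat) (w : nat -> nat -> R) : R :=
  maxR (n - 1) (vol n w) / minR (n - 1) (vol n w).

(* Main.v *)
Require Import Defs.
From Stdlib Require Import Reals Lra Lia Classical FunctionalExtensionality.
Open Scope R_scope.

Lemma sumR_ext n f g : (forall i, (i < n)%nat -> f i = g i) -> sumR n f = sumR n g.
Proof. induction n; intros H; simpl; auto. rewrite IHn, H; auto; intros; apply H; lia. Qed.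

Lemma sumR_lin2 n p q f g : sumR n (fun i => p * f i + q * g i) = p * sumR n f + q * sumR n g.
Proof. induction n; simpl; [ring|]. rewrite IHn; ring. Qed.

Lemma sumR_lin3 n p q s f g k : sumR n (fun i => p * f i + q * g i + s * k i) = p * sumR n f + q * sumR n g + s * sumR n k.
Proof. induction n; simpl; [ring|]. rewrite IHn; ring. Qed.

Lemma sumR_scal n c f : sumR n (fun i => c * f i) = c * sumR n f.
Proof. induction n; simpl; [ring|]. rewrite IHn; ring. Qed.

Lemma sumR_plus n f g : sumR n (fun i => f i + g i) = sumR n f + sumR n g.
Proof. induction n; simpl; [ring|]. rewrite IHn; ring. Qed.

Lemma sumR_zero n : sumR n (fun _ => 0) = 0.
Proof. induction n; simpl; [ring|]. rewrite IHn; ring. Qed.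

Lemma sumR_ext0 n f : (forall i, (i < n)%nat -> f i = 0) -> sumR n f = 0.
Proof. intros H. rewrite (sumR_ext n f (fun _ => 0)) by auto. apply sumR_zero. Qed.

Lemma sumR_const n c : sumR n (fun _ => c) = INR n * c.
Proof. induction n; simpl sumR; [simpl; ring|]. rewrite IHn, S_INR; ring. Qed.

Lemma sumR_le n f g : (forall i, (i < n)%nat -> f i <= g i) -> sumR n f <= sumR n g.
Proof. induction n; intros H; simpl; [lra|]. assert (H1 := H n ltac:(lia)).
 assert (sumR n f <= sumR n g) by (apply IHn; intros; apply H; lia). lra. Qed.

Lemma sumR_nonneg n f : (forall i, (i < n)%nat -> 0 <= f i) -> 0 <= sumR n f.
Proof. intros H. rewrite <- (sumR_zero n). apply sumR_le; auto. Qed.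

Lemma sumR_single n f k : (forall i, (i < n)%nat -> 0 <= f i) -> (k < n)%nat -> f k <= sumR n f.
Proof. induction n; intros H Hk; [lia|]. simpl.
 assert (0 <= sumR n f) by (apply sumR_nonneg; intros; apply H; lia).
 destruct (Nat.eq_dec k n). subst; lra.
 assert (f k <= sumR n f) by (apply IHn; [intros; apply H; lia| lia]).
 assert (0 <= f n) by (apply H; lia). lra. Qed.

Lemma sumR_pos_ex n f : 0 < sumR n f -> exists i, (i < n)%nat /\ 0 < f i.
Proof. induction n; simpl; intros H; [lra|].
 destruct (Rlt_dec 0 (f n)). exists n; split; auto.
 destruct IHn as [i [Hi Hf]]. lra. exists i; split; auto. Qed.

Lemma sumR_kron n u X Y : (u < n)%nat ->
  sumR n (fun v => if Nat.eq_dec u v then X else Y v) = sumR n Y - Y u + X.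
Proof. induction n; intros Hu; [lia|]. simpl.
 destruct (Nat.eq_dec u n).
 - subst. rewrite (sumR_ext n _ Y). ring. intros i Hi. destruct (Nat.eq_dec n i); [lia|auto].
 - rewrite IHn by lia. ring. Qed.

Definition aff (F : R -> R) := forall t, F t = (1 - t) * F 0 + t * F 1.

Lemma aff_sum n (f : R -> nat -> R) : (forall i, (i < n)%nat -> aff (fun t => f t i)) ->
  aff (fun t => sumR n (f t)).
Proof. induction n; intros H t; simpl; [ring|].
 rewrite (IHn ltac:(intros; apply H; lia) t). rewrite (H n ltac:(lia) t). ring. Qed.

Definition upd (r : nat -> R) k t : nat -> R := fun u => if Nat.eq_dec u k then t else r u.

Lemma vertex n (Phi : (nat -> R) -> R) :
 (forall k r, (k < n)%nat -> aff (fun t => Phi (upd r k t))) ->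
 (forall r, (forall u, (u<n)%nat -> r u = 0 \/ r u = 1) -> 0 <= Phi r) ->
 forall r, (forall u, (u<n)%nat -> 0 <= r u <= 1) -> 0 <= Phi r.
Proof.
 intros Haff Hb.
 assert (forall m r, (forall u, (u<n)%nat -> 0 <= r u <= 1) ->
   (forall u, (m <= u < n)%nat -> r u = 0 \/ r u = 1) -> 0 <= Phi r).
 { induction m; intros r Hr Hbr.
   - apply Hb; intros; apply Hbr; lia.
   - destruct (Compare_dec.lt_dec m n).
     + assert (E : r = upd r m (r m)).
       { apply functional_extensionality; intro u; unfold upd; destruct (Nat.eq_dec u m); subst; auto. }
       rewrite E, (Haff m r l (r m)).
       assert (0 <= Phi (upd r m 0)).
       { apply IHm; intros u Hu; unfold upd; destruct (Nat.eq_dec u m); try lra; auto.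
         apply Hbr; lia. }
       assert (0 <= Phi (upd r m 1)).
       { apply IHm; intros u Hu; unfold upd; destruct (Nat.eq_dec u m); try lra; auto.
         apply Hbr; lia. }
       assert (H3 := Hr m l). nra.
     + apply IHm; auto. intros; apply Hbr; lia. }
 intros r Hr; apply (H n); auto. intros; lia.
Qed.
Definition Nr n w (r : nat -> R) := sumR n (fun u => sumR n (fun v => r u * (1 - r v) * w u v)).
Definition Ar n w (r : nat -> R) := sumR n (fun u => r u * vol n w u).
Definition Dr n w (r : nat -> R) := sumR n (fun u => sumR n (fun v =>
  if Nat.eq_dec u v then r u * (vol n w u)^2 else r u * r v * vol n w u * vol n w v)).
Definition Vr n w (r : nat -> R) := sumR n (fun u => r u * (1 - r u) * (vol n w u)^2).

Lemma aff_Nr n w r k : loopless n w -> (k < n)%nat -> aff (fun t => Nr n w (upd r k t)).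
Proof. intros Hl Hk. unfold Nr. apply aff_sum; intros u Hu. apply aff_sum; intros v Hv.
 intro t; cbv beta; unfold upd.
 destruct (Nat.eq_dec u k); destruct (Nat.eq_dec v k); subst; try (rewrite Hl by assumption); ring. Qed.

Lemma aff_Ar n w r k : aff (fun t => Ar n w (upd r k t)).
Proof. unfold Ar. apply aff_sum; intros u Hu.
 intro t; cbv beta; unfold upd. destruct (Nat.eq_dec u k); ring. Qed.

Lemma aff_Dr n w r k : aff (fun t => Dr n w (upd r k t)).
Proof. unfold Dr. apply aff_sum; intros u Hu. apply aff_sum; intros v Hv.
 intro t; cbv beta; unfold upd.
 destruct (Nat.eq_dec u v); destruct (Nat.eq_dec u k); destruct (Nat.eq_dec v k); subst; try congruence; ring. Qed.

Lemma Dr_id n w r : Dr n w r = (Ar n w r)^2 + Vr n w r.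
Proof. unfold Dr, Vr.
 rewrite (sumR_ext n _ (fun u => Ar n w r * (r u * vol n w u) + 1 * (r u * (1 - r u) * vol n w u ^ 2))).
 - rewrite sumR_lin2. unfold Ar; ring.
 - intros u Hu. rewrite sumR_kron by auto.
   rewrite (sumR_ext n (fun v => r u * r v * vol n w u * vol n w v) (fun v => (r u * vol n w u) * (r v * vol n w v))) by (intros; ring).
   rewrite sumR_scal. unfold Ar; ring.
Qed.

Lemma volS_compl n w S : volS n w S + volS n w (fun v => negb (S v)) = sumR n (vol n w).
Proof. unfold volS. rewrite <- sumR_plus. apply sumR_ext; intros; destruct (S i); simpl; ring. Qed.

Lemma vol_nonneg n w u : weighted_graph n w -> (u < n)%nat -> 0 <= vol n w u.
Proof. intros Hw Hu. unfold vol. apply sumR_nonneg. intros i Hi. apply (Hw i u Hi Hu). Qed.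

Lemma volS_bounds n w S : weighted_graph n w -> 0 <= volS n w S <= sumR n (vol n w).
Proof. intros Hw. unfold volS. split.
 - apply sumR_nonneg; intros; destruct (S i); [apply vol_nonneg|]; auto; lra.
 - apply sumR_le; intros; destruct (S i); [lra|apply vol_nonneg; auto]. Qed.

Lemma round n w h al be ka a0 (Hw : weighted_graph n w) (Hl : loopless n w) (Hh : 0 < h)
  (Hcut : forall S, nonempty_proper n S ->
     h * Rmin (volS n w S) (volS n w (fun v => negb (S v))) <= cut n w S)
  (Hq : forall x, 0 <= x <= sumR n (vol n w) ->
     al + be * (x - a0) - ka * (x - a0)^2 <= Rmin x (sumR n (vol n w) - x))
  r : (forall u, (u < n)%nat -> 0 <= r u <= 1) ->
  h * (al + be * (Ar n w r - a0) - ka * (Dr n w r - 2 * a0 * Ar n w r + a0^2)) <= Nr n w r.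
Proof.
 intros Hr.
 set (Phi := fun r => Nr n w r - h * (al + be * (Ar n w r - a0) - ka * (Dr n w r - 2 * a0 * Ar n w r + a0^2))).
 enough (0 <= Phi r) by (unfold Phi in *; lra).
 apply (vertex n); auto.
 - intros k r0 Hk t. unfold Phi.
   rewrite (aff_Nr n w r0 k Hl Hk t), (aff_Ar n w r0 k t), (aff_Dr n w r0 k t). ring.
 - clear r Hr. intros r Hb. unfold Phi.
   set (S := fun u => if Req_dec_T (r u) 1 then true else false).
   assert (HS : forall u, (u < n)%nat -> r u = if S u then 1 else 0).
   { intros u Hu; unfold S; destruct (Req_dec_T (r u) 1); auto. destruct (Hb u Hu); auto; congruence. }
   assert (EN : Nr n w r = cut n w S).
   { unfold Nr, cut. apply sumR_ext; intros u Hu. apply sumR_ext; intros v Hv.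
     rewrite (HS u Hu), (HS v Hv). destruct (S u), (S v); ring. }
   assert (EA : Ar n w r = volS n w S).
   { unfold Ar, volS. apply sumR_ext; intros u Hu. rewrite (HS u Hu). destruct (S u); ring. }
   assert (EV : Vr n w r = 0).
   { unfold Vr. apply sumR_ext0; intros u Hu. rewrite (HS u Hu). destruct (S u); ring. }
   rewrite Dr_id, EV, EN, EA.
   assert (Hc := volS_compl n w S). assert (Hbd := volS_bounds n w S Hw).
   set (V := sumR n (vol n w)) in *.
   assert (HQ := Hq (volS n w S) Hbd).
   destruct (classic (nonempty_proper n S)) as [HP|HP].
   + assert (H1 := Hcut S HP).
     replace (volS n w (fun v => negb (S v))) with (V - volS n w S) in H1 by lra.
     assert (h * (al + be * (volS n w S - a0) - ka * (volS n w S - a0)^2) <= h * Rmin (volS n w S) (V - volS n w S))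
       by (apply Rmult_le_compat_l; lra).
     nra.
   + unfold nonempty_proper in HP. apply not_and_or in HP.
     assert (Hz : cut n w S = 0 /\ (volS n w S = 0 \/ volS n w S = V)).
     { destruct HP as [HP|HP].
       - assert (Hf : forall i, (i < n)%nat -> S i = false).
         { intros i Hi. destruct (S i) eqn:E; auto. exfalso; apply HP; exists i; auto. }
         split; [|left].
         + unfold cut. apply sumR_ext0; intros u Hu.
           rewrite Hf by auto. apply sumR_zero.
         + unfold volS. apply sumR_ext0; intros u Hu. rewrite Hf; auto.
       - assert (Hf : forall i, (i < n)%nat -> S i = true).
         { intros i Hi. destruct (S i) eqn:E; auto. exfalso; apply HP; exists i; auto. }
         split; [|right].
         + unfold cut. apply sumR_ext0; intros u Hu.
           apply sumR_ext0; intros v Hv. rewrite !Hf by auto. auto.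
         + unfold volS, V. apply sumR_ext; intros u Hu. rewrite Hf; auto. }
     destruct Hz as [Hz1 Hz2]. rewrite Hz1.
     assert (Rmin (volS n w S) (V - volS n w S) = 0).
     { destruct Hz2 as [E|E]; rewrite E; [apply Rmin_left; lra|]. replace (V - V) with 0 by ring; apply Rmin_right; lra. }
     assert (0 <= h * -(al + be * (volS n w S - a0) - ka * (volS n w S - a0)^2)) by (apply Rmult_le_pos; lra).
     nra.
Qed.
Lemma maxR_ge k f i : (i <= k)%nat -> f i <= maxR k f.
Proof. induction k; intros H; simpl.
 - replace i with 0%nat by lia; lra.
 - destruct (Nat.eq_dec i (S k)). subst; apply Rmax_r.
   eapply Rle_trans; [apply IHk; lia| apply Rmax_l]. Qed.

Lemma minR_le k f i : (i <= k)%nat -> minR k f <= f i.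
Proof. induction k; intros H; simpl.
 - replace i with 0%nat by lia; lra.
 - destruct (Nat.eq_dec i (S k)). subst; apply Rmin_r.
   eapply Rle_trans; [apply Rmin_l| apply IHk; lia]. Qed.

Lemma minR_pos k f : (forall i, (i <= k)%nat -> 0 < f i) -> 0 < minR k f.
Proof. induction k; intros H; simpl. apply H; lia.
 apply Rmin_pos; [apply IHk; intros; apply H; lia | apply H; lia]. Qed.

Lemma cut_term_nonneg n w (S : nat -> bool) u v : weighted_graph n w -> (u < n)%nat -> (v < n)%nat ->
  0 <= (if S u then (if S v then 0 else w u v) else 0).
Proof. intros Hw Hu Hv. destruct (S u), (S v); try lra. apply (Hw u v Hu Hv). Qed.

Lemma cut_cross n w (S : nat -> bool) : weighted_graph n w -> 0 < cut n w S ->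
  exists u v, (u < n)%nat /\ (v < n)%nat /\ S u = true /\ S v = false /\ 0 < w u v /\ w u v <= cut n w S.
Proof. intros Hw H. unfold cut in *.
 destruct (sumR_pos_ex _ _ H) as [u [Hu H1]].
 destruct (sumR_pos_ex _ _ H1) as [v [Hv H2]].
 assert (Hle : (if S u then (if S v then 0 else w u v) else 0) <= cut n w S).
 { eapply Rle_trans.
   2: apply (sumR_single n (fun u => sumR n (fun v => if S u then (if S v then 0 else w u v) else 0)) u); auto; intros; apply sumR_nonneg; intros; apply (cut_term_nonneg n w); auto.
   apply (sumR_single n (fun v => if S u then (if S v then 0 else w u v) else 0) v); auto.
   intros; apply (cut_term_nonneg n w); auto. }
 unfold cut in Hle.
 exists u, v. destruct (S u), (S v); try lra. repeat split; auto. Qed.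

Lemma vol_pos n w u : (2 <= n)%nat -> weighted_graph n w -> connected n w -> (u < n)%nat -> 0 < vol n w u.
Proof. intros Hn Hw Hc Hu.
 set (S := fun x => Nat.eqb x u).
 assert (HP : nonempty_proper n S).
 { split. exists u; split; auto; unfold S; apply Nat.eqb_refl.
   destruct (Nat.eq_dec u 0). exists 1%nat; split; [lia|]; unfold S; apply Nat.eqb_neq; lia.
   exists 0%nat; split; [lia|]; unfold S; apply Nat.eqb_neq; lia. }
 destruct (cut_cross n w S Hw (Hc S HP)) as [x [y [Hx [Hy [HSx [HSy [Hxy _]]]]]]].
 unfold S in HSx; apply Nat.eqb_eq in HSx; subst x.
 unfold vol. eapply Rlt_le_trans; [|apply (sumR_single n (fun z => w z u) y); auto].
 destruct (Hw u y Hu Hy) as [_ E]; cbv beta; lra.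
 intros; apply (Hw i u); auto. Qed.

Lemma volS_pos n w (S : nat -> bool) i : (2 <= n)%nat -> weighted_graph n w -> connected n w -> (i < n)%nat -> S i = true ->
  0 < volS n w S.
Proof. intros Hn Hw Hc Hi HS. unfold volS.
 eapply Rlt_le_trans; [|apply (sumR_single n (fun v => if S v then vol n w v else 0) i); auto]. cbv beta.
 rewrite HS; apply vol_pos; auto.
 intros j Hj; destruct (S j); [apply vol_nonneg; auto|lra]. Qed.

Lemma Vsum_pos n w : (2 <= n)%nat -> weighted_graph n w -> connected n w -> 0 < sumR n (vol n w).
Proof. intros Hn Hw Hc. eapply Rlt_le_trans; [|apply (sumR_single n _ 0)].
 apply vol_pos; auto; lia. intros; apply vol_nonneg; auto. lia. Qed.

Lemma hG_pos n w hG : (2 <= n)%nat -> weighted_graph n w -> connected n w ->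
  is_glb (cheeger_values n w) hG -> 0 < hG.
Proof. intros Hn Hw Hc [_ Hg].
 set (wp := fun u v => if Rlt_dec 0 (w u v) then w u v else 1).
 set (d := minR (n-1) (fun u => minR (n-1) (fun v => wp u v))).
 assert (Hd : 0 < d).
 { apply minR_pos; intros; apply minR_pos; intros. unfold wp; destruct (Rlt_dec 0 (w i i0)); lra. }
 set (V := sumR n (vol n w)).
 assert (HV : 0 < V) by (apply Vsum_pos; auto).
 assert (d / V <= hG).
 { apply Hg. intros x [S [HP Ex]]. subst x.
   destruct (cut_cross n w S Hw (Hc S HP)) as [u [v [Hu [Hv [HSu [HSv [Huv Hcut]]]]]]].
   assert (Hdw : d <= w u v).
   { unfold d. eapply Rle_trans; [apply (minR_le _ _ u); lia|].
     eapply Rle_trans; [apply (minR_le _ _ v); lia|]. unfold wp; destruct (Rlt_dec 0 (w u v)); lra. }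
   assert (H1 : 0 < volS n w S) by (apply (volS_pos n w S u); auto).
   assert (H2 : 0 < volS n w (fun v => negb (S v))) by (apply (volS_pos n w _ v); auto; rewrite HSv; auto).
   set (m := Rmin (volS n w S) (volS n w (fun v => negb (S v)))).
   assert (Hm : 0 < m) by (apply Rmin_pos; auto).
   assert (HmV : m <= V) by (eapply Rle_trans; [apply Rmin_l| apply (volS_bounds n w S Hw)]).
   apply Rle_trans with (d / m).
   - unfold Rdiv; apply Rmult_le_compat_l; [lra|]. apply Rinv_le_contravar; auto.
   - unfold Rdiv; apply Rmult_le_compat_r; [left; apply Rinv_0_lt_compat; auto| lra]. }
 assert (0 < d / V) by (apply Rdiv_lt_0_compat; auto). lra.
Qed.

Lemma var_bound n w r vmax : weighted_graph n w -> 0 < sumR n (vol n w) ->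
  (forall u, (u < n)%nat -> vol n w u <= vmax) -> 0 <= vmax ->
  (forall u, (u < n)%nat -> 0 <= r u <= 1) ->
  Vr n w r <= vmax * Ar n w r * (sumR n (vol n w) - Ar n w r) / sumR n (vol n w).
Proof. intros Hw HV Hvm Hv0 Hr.
 set (V := sumR n (vol n w)) in *. set (A := Ar n w r).
 set (Q := sumR n (fun u => r u ^ 2 * vol n w u)).
 assert (H1 : Vr n w r <= vmax * (A - Q)).
 { replace (A - Q) with (sumR n (fun u => r u * (1 - r u) * vol n w u)).
   - unfold Vr. rewrite <- sumR_scal. apply sumR_le; intros u Hu.
     assert (h1 := Hr u Hu). assert (h2 := Hvm u Hu). assert (h3 := vol_nonneg n w u Hw Hu).
     assert (0 <= r u * (1 - r u) * vol n w u) by (apply Rmult_le_pos; [nra|lra]). nra.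
   - unfold A, Q, Ar. rewrite (sumR_ext n _ (fun u => 1 * (r u * vol n w u) + (-1) * (r u ^ 2 * vol n w u))) by (intros; ring).
     rewrite sumR_lin2; ring. }
 assert (H2 : A ^ 2 / V <= Q).
 { set (c := A / V).
   assert (H3 : 0 <= sumR n (fun u => vol n w u * (r u - c)^2)).
   { apply sumR_nonneg; intros u Hu. assert (h3 := vol_nonneg n w u Hw Hu). apply Rmult_le_pos; [auto| apply pow2_ge_0]. }
   rewrite (sumR_ext n _ (fun u => 1 * (r u ^ 2 * vol n w u) + (-2 * c) * (r u * vol n w u) + (c^2) * vol n w u)) in H3 by (intros; ring).
   rewrite sumR_lin3 in H3. fold Q V in H3. change (sumR n (fun u => r u * vol n w u)) with A in H3.
   unfold c in H3.
   replace (A ^ 2 / V) with (2 * (A / V) * A - (A / V)^2 * V) by (field; lra). lra. }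
 assert (vmax * (A - Q) <= vmax * (A - A^2 / V)) by (apply Rmult_le_compat_l; lra).
 replace (vmax * A * (V - A) / V) with (vmax * (A - A^2/V)) by (field; lra). lra.
Qed.
Lemma Rdiv_le_0_compat x y : 0 <= x -> 0 < y -> 0 <= x / y.
Proof. intros; unfold Rdiv; apply Rmult_le_pos; [|left; apply Rinv_0_lt_compat]; auto. Qed.

Lemma qA e m a x : 0 < e < 1 -> 0 < m -> m <= a -> 0 <= x ->
  (1 - e) * m - (1 - e) / (e^2 * m) * (x - a)^2 <= x.
Proof. intros He Hm Ha Hx.
 assert (Hk : 0 < (1 - e) / (e^2 * m)) by (apply Rdiv_lt_0_compat; [lra| apply Rmult_lt_0_compat; [apply pow_lt; lra|lra]]).
 destruct (Rle_dec (a - e * m) x).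
 - assert (0 <= (1 - e) / (e^2 * m) * (x - a)^2) by (apply Rmult_le_pos; [lra|apply pow2_ge_0]). nra.
 - assert (H1 : (e * m)^2 <= (x - a)^2).
   { assert (0 < e*m) by nra. assert (e * m < a - x) by lra.
     replace ((x - a)^2) with ((a - x) * (a - x)) by ring. replace ((e*m)^2) with ((e*m)*(e*m)) by ring.
     apply Rmult_le_compat; lra. }
   assert (H2 : (1 - e) / (e^2 * m) * (e*m)^2 = (1 - e) * m) by (field; nra).
   assert ((1 - e) / (e^2 * m) * (e*m)^2 <= (1 - e) / (e^2 * m) * (x - a)^2) by (apply Rmult_le_compat_l; lra).
   lra.
Qed.

Lemma qB1 a V x : 0 < V - 2 * a ->
  a + 1 * (x - a) - 1 / (V - 2 * a) * (x - a)^2 <= Rmin x (V - x).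
Proof. intros HD. apply Rmin_glb.
 - assert (0 <= 1 / (V - 2 * a) * (x - a)^2) by (apply Rmult_le_pos; [left; apply Rdiv_lt_0_compat; lra|apply pow2_ge_0]). lra.
 - assert (E : V - x - (a + 1 * (x - a) - 1 / (V - 2 * a) * (x - a)^2) = (x - V + a)^2 / (V - 2*a)) by (field; lra).
   assert (0 <= (x - V + a)^2 / (V - 2*a)) by (apply Rdiv_le_0_compat; [apply pow2_ge_0|lra]). lra.
Qed.

Lemma qB2 a V x : 0 < V - 2 * (V - a) ->
  (V - a) + -1 * (x - a) - 1 / (V - 2 * (V - a)) * (x - a)^2 <= Rmin x (V - x).
Proof. intros HD.
 assert (H := qB1 (V - a) V (V - x) HD).
 replace (V - (V - x)) with x in H by ring.
 replace ((V - x - (V - a))^2) with ((x - a)^2) in H by ring.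
 rewrite Rmin_comm. lra. Qed.

Lemma algA e m M V vm g nn Var : 0 < e < 1 -> 0 < m -> M <= 2 * m -> 0 < V ->
  0 < nn -> 0 <= vm -> vm * nn <= g * V -> Var <= vm * m * M / V -> 0 <= M ->
  (1 - 2 * g / (e^2 * nn)) * (1 - e) * m <= (1 - e) * m - (1 - e) / (e^2 * m) * Var.
Proof. intros He Hm HM HV Hn Hvm Hg HVar HM0.
 assert (h1 : vm * m * M / V <= 2 * g * m^2 / nn).
 { assert (vm * m * M <= vm * 2 * m^2) by (assert (0 <= vm * m) by nra; nra).
   assert (vm * 2 * m^2 / V <= 2 * g * m^2 / nn).
   { apply Rmult_le_reg_r with (V * nn); [nra|].
     replace (vm * 2 * m^2 / V * (V * nn)) with (2 * m^2 * (vm * nn)) by (field; lra).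
     replace (2 * g * m^2 / nn * (V * nn)) with (2 * m^2 * (g * V)) by (field; lra).
     apply Rmult_le_compat_l; nra. }
   assert (vm * m * M / V <= vm * 2 * m^2 / V) by (apply Rmult_le_compat_r; [left; apply Rinv_0_lt_compat|]; lra).
   lra. }
 assert (Hk : 0 < (1 - e) / (e^2 * m)) by (apply Rdiv_lt_0_compat; [lra| apply Rmult_lt_0_compat; [apply pow_lt; lra|lra]]).
 assert ((1 - e) / (e^2 * m) * Var <= (1 - e) / (e^2 * m) * (2 * g * m^2 / nn)) by (apply Rmult_le_compat_l; lra).
 replace ((1 - e) / (e^2 * m) * (2 * g * m^2 / nn)) with ((1 - e) * m * (2 * g / (e^2 * nn))) in H by (field; nra).
 lra.
Qed.

Lemma algB e m M V vm g nn Var : 0 < e < 1 -> 0 < m -> 2 * m <= M -> m + M = V ->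
  0 < nn -> 0 <= vm -> vm * nn <= g * V -> Var <= vm * m * M / V ->
  0 < (1 - 2 * g / (e^2 * nn)) * (1 - e) ->
  (1 - 2 * g / (e^2 * nn)) * (1 - e) * m <= m - 1 / (V - 2 * m) * Var.
Proof. intros He Hm HM HV Hn Hvm Hg HVar Hc.
 assert (HV0 : 0 < V) by lra.
 assert (h1 : 1 / (V - 2 * m) * Var <= 2 * g / nn * m).
 { assert (1 / (V - 2 * m) * Var <= 1 / (V - 2 * m) * (vm * m * M / V)) by (apply Rmult_le_compat_l; [left; apply Rdiv_lt_0_compat|]; lra).
   assert (1 / (V - 2 * m) * (vm * m * M / V) <= 2 * g / nn * m).
   { apply Rmult_le_reg_r with ((V - 2 * m) * V * nn); [apply Rmult_lt_0_compat; [nra|lra]|].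
     replace (1 / (V - 2 * m) * (vm * m * M / V) * ((V - 2 * m) * V * nn)) with (m * M * (vm * nn)) by (field; lra).
     replace (2 * g / nn * m * ((V - 2 * m) * V * nn)) with (2 * m * (V - 2 * m) * (g * V)) by (field; lra).
     assert (m * M * (vm * nn) <= m * M * (g * V)) by (apply Rmult_le_compat_l; nra).
     assert (0 <= vm * nn) by (apply Rmult_le_pos; lra).
     assert (0 <= g * V) by lra.
     assert (m * M <= 2 * m * (V - 2 * m)) by nra.
     assert (m * M * (g * V) <= 2 * m * (V - 2 * m) * (g * V)) by (apply Rmult_le_compat_r; lra). lra. }
   lra. }
 set (y := 2 * g / (e^2 * nn)).
 assert (Ey : 2 * g / nn = y * e^2) by (unfold y; field; lra).
 rewrite Ey in h1.
 assert (Hy : 0 < 1 - y). { apply (Rmult_lt_reg_r (1 - e)). lra. rewrite Rmult_0_l. exact Hc. }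
 assert (0 <= vm * nn) by (apply Rmult_le_pos; lra).
 assert (0 <= g) by (apply (Rmult_le_reg_r V); lra).
 assert (0 <= y) by (unfold y; apply Rdiv_le_0_compat; [lra|]; apply Rmult_lt_0_compat; [apply pow_lt|]; lra).
 assert (Hk : (1 - y) * (1 - e) <= 1 - y * e^2).
 { assert (0 <= e * (1 - y * e)) by (apply Rmult_le_pos; nra).
   assert (0 <= y * (1 - e)) by (apply Rmult_le_pos; lra). nra. }
 assert ((1 - y) * (1 - e) * m <= (1 - y * e^2) * m) by (apply Rmult_le_compat_r; lra).
 lra.
Qed.
Theorem mainTheorem12 (n : nat) (w : nat -> nat -> R)
  (Hn : (2 <= n)%nat) (Hw : weighted_graph n w) (Hl : loopless n w)
  (Hc : connected n w)
  (hG : R) (HhG : is_glb (cheeger_values n w) hG)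
  (th : R) (Hth : is_glb (frac_cheeger_values n w) th)
  (eps : R) (Heps : 0 < eps < 1) :
  th / hG >= (1 - 2 * gamma n w / (eps ^ 2 * INR n)) * (1 - eps).
Proof.
 assert (Hh : 0 < hG) by (apply (hG_pos n w); auto).
 set (V := sumR n (vol n w)).
 assert (HV : 0 < V) by (apply Vsum_pos; auto).
 set (vmax := maxR (n - 1) (vol n w)). set (vmin := minR (n - 1) (vol n w)).
 assert (Hvmax : forall u, (u < n)%nat -> vol n w u <= vmax) by (intros; apply maxR_ge; lia).
 assert (Hvmin : forall u, (u < n)%nat -> vmin <= vol n w u) by (intros; apply minR_le; lia).
 assert (Hvmin0 : 0 < vmin) by (apply minR_pos; intros; apply vol_pos; auto; lia).
 assert (Hvm0 : 0 <= vmax) by (assert (H0 := Hvmax 0%nat ltac:(lia)); assert (H1 := vol_pos n w 0 Hn Hw Hc ltac:(lia)); lra).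
 assert (Hnn : 0 < INR n) by (apply lt_0_INR; lia).
 assert (HVn : INR n * vmin <= V) by (rewrite <- sumR_const; apply sumR_le; auto).
 assert (Hg : vmax * INR n <= gamma n w * V).
 { unfold gamma; fold vmax vmin.
   assert (vmax / vmin * (INR n * vmin) <= vmax / vmin * V) by (apply Rmult_le_compat_l; [apply Rdiv_le_0_compat|]; lra).
   replace (vmax / vmin * (INR n * vmin)) with (vmax * INR n) in H by (field; lra). lra. }
 set (g := gamma n w) in *.
 set (c := (1 - 2 * g / (eps ^ 2 * INR n)) * (1 - eps)).
 assert (Hcut : forall S, nonempty_proper n S ->
     hG * Rmin (volS n w S) (volS n w (fun v => negb (S v))) <= cut n w S).
 { intros S HP. destruct HP as [[i [Hi HSi]] [j [Hj HSj]]].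
   assert (H1 : 0 < volS n w S) by (apply (volS_pos n w S i); auto).
   assert (H2 : 0 < volS n w (fun v => negb (S v))) by (apply (volS_pos n w _ j); auto; rewrite HSj; auto).
   assert (Hm : 0 < Rmin (volS n w S) (volS n w (fun v => negb (S v)))) by (apply Rmin_pos; auto).
   assert (hG <= cut n w S / Rmin (volS n w S) (volS n w (fun v => negb (S v)))).
   { apply (proj1 HhG). exists S; split; auto. split; [exists i|exists j]; auto. }
   apply Rmult_le_compat_r with (r := Rmin (volS n w S) (volS n w (fun v => negb (S v)))) in H; [|lra].
   unfold Rdiv in H. rewrite Rmult_assoc, Rinv_l in H by lra. lra. }
 assert (Key : forall x, frac_cheeger_values n w x -> hG * c <= x).
 { intros x [rho [eta [HFP [Ha [Hb Ex]]]]]. subst x.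
   assert (Hr : forall u, (u < n)%nat -> 0 <= rho u <= 1) by (intros u Hu; destruct (HFP u Hu) as [? [? ?]]; lra).
   assert (Heta : forall u, (u < n)%nat -> eta u = 1 - rho u) by (intros u Hu; destruct (HFP u Hu) as [? [? ?]]; lra).
   assert (EN : sumR n (fun u => sumR n (fun v => rho u * eta v * w u v)) = Nr n w rho).
   { unfold Nr. apply sumR_ext; intros u Hu. apply sumR_ext; intros v Hv. rewrite Heta; auto. }
   set (A := Ar n w rho).
   assert (Ea : fnorm n w rho = A) by reflexivity.
   assert (Eb : fnorm n w eta = V - A).
   { unfold fnorm, A, Ar, V. rewrite (sumR_ext n _ (fun u => 1 * vol n w u + (-1) * (rho u * vol n w u))).
     rewrite sumR_lin2; ring. intros u Hu; rewrite Heta; auto; ring. }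
   assert (HA0 : 0 <= A) by (apply sumR_nonneg; intros u Hu; apply Rmult_le_pos; [apply Hr|apply vol_nonneg]; auto).
   assert (HB0 : 0 <= fnorm n w eta).
   { apply sumR_nonneg; intros u Hu; apply Rmult_le_pos; [rewrite Heta; auto; assert (H := Hr u Hu); lra|apply vol_nonneg; auto]. }
   assert (HA : 0 < A) by (rewrite Ea in Ha; lra).
   assert (HB : 0 < V - A) by (rewrite Eb in Hb, HB0; lra).
   assert (HN0 : 0 <= Nr n w rho).
   { apply sumR_nonneg; intros u Hu; apply sumR_nonneg; intros v Hv.
     assert (H1 := Hr u Hu). assert (H2 := Hr v Hv). assert (H3 := proj1 (Hw u v Hu Hv)).
     apply Rmult_le_pos; [apply Rmult_le_pos|]; lra. }
   assert (HVar := var_bound n w rho vmax Hw HV Hvmax Hvm0 Hr). fold V A in HVar.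
   assert (HVar0 : 0 <= Vr n w rho).
   { apply sumR_nonneg; intros u Hu. assert (H1 := Hr u Hu).
     apply Rmult_le_pos; [apply Rmult_le_pos|apply pow2_ge_0]; lra. }
   unfold frac_ratio. rewrite EN, Ea, Eb.
   set (m := Rmin A (V - A)).
   assert (Hm : 0 < m) by (apply Rmin_pos; auto).
   assert (HmA : m <= A) by apply Rmin_l. assert (HmB : m <= V - A) by apply Rmin_r.
   assert (HmM : A * (V - A) = m * (V - m)).
   { unfold m; destruct (Rle_dec A (V - A)); [rewrite Rmin_left|rewrite Rmin_right]; try lra; ring. }
   rewrite (Rmult_assoc vmax A), HmM, <- Rmult_assoc in HVar.
   enough (hG * c * m <= Nr n w rho).
   { apply Rmult_le_reg_r with m; auto. replace (Nr n w rho / m * m) with (Nr n w rho) by (field; lra). lra. }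
   destruct (Rle_dec c 0) as [Hc0|Hc0].
   { assert (hG * c * m <= 0). { assert (0 <= hG * m) by nra. nra. } lra. }
   apply Rnot_le_lt in Hc0.
   assert (HDr : Dr n w rho - 2 * A * A + A^2 = Vr n w rho) by (rewrite Dr_id; fold A; ring).
   destruct (Rle_dec V (3 * m)) as [H3|H3].
   - set (K := (1 - eps) / (eps^2 * m)).
     assert (HR := round n w hG ((1 - eps) * m) 0 K A Hw Hl Hh Hcut).
     assert (HR' : hG * ((1 - eps) * m + 0 * (A - A) - K * (Dr n w rho - 2 * A * A + A^2)) <= Nr n w rho).
     { apply HR; auto. intros x Hx. fold V in Hx |- *. apply Rmin_glb.
       - assert (H := qA eps m A x Heps Hm HmA (proj1 Hx)). unfold K. lra.
       - assert (H := qA eps m (V - A) (V - x) Heps Hm HmB ltac:(lra)).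
         replace ((V - x - (V - A))^2) with ((x - A)^2) in H by ring. unfold K. lra. }
     rewrite HDr in HR'.
     assert (HAl := algA eps m (V - m) V vmax g (INR n) (Vr n w rho) Heps Hm ltac:(lra) HV Hnn Hvm0 Hg HVar ltac:(lra)).
     fold c in HAl. fold K in HAl.
     assert (hG * (c * m) <= hG * ((1 - eps) * m - K * Vr n w rho)) by (apply Rmult_le_compat_l; lra).
     lra.
   - apply Rnot_le_lt in H3.
     assert (HAl := algB eps m (V - m) V vmax g (INR n) (Vr n w rho) Heps Hm ltac:(lra) ltac:(lra) Hnn Hvm0 Hg HVar Hc0).
     fold c in HAl.
     assert (HR2 : hG * (m - 1 / (V - 2 * m) * Vr n w rho) <= Nr n w rho).
     { destruct (Rle_dec A (V - A)) as [HAB|HAB].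
       + assert (Em : m = A) by (unfold m; apply Rmin_left; auto). rewrite Em in *.
         assert (HR := round n w hG A 1 (1 / (V - 2 * A)) A Hw Hl Hh Hcut).
         assert (HR' : hG * (A + 1 * (A - A) - 1 / (V - 2 * A) * (Dr n w rho - 2 * A * A + A^2)) <= Nr n w rho).
         { apply HR; auto. intros x Hx. fold V. apply qB1. lra. }
         rewrite HDr in HR'. replace (A + 1 * (A - A)) with A in HR' by ring. exact HR'.
       + assert (Em : m = V - A) by (unfold m; apply Rmin_right; lra). rewrite Em in *.
         assert (HR := round n w hG (V - A) (-1) (1 / (V - 2 * (V - A))) A Hw Hl Hh Hcut).
         assert (HR' : hG * ((V - A) + -1 * (A - A) - 1 / (V - 2 * (V - A)) * (Dr n w rho - 2 * A * A + A^2)) <= Nr n w rho).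
         { apply HR; auto. intros x Hx. fold V. apply qB2. lra. }
         rewrite HDr in HR'. replace ((V - A) + -1 * (A - A)) with (V - A) in HR' by ring. exact HR'. }
     assert (hG * (c * m) <= hG * (m - 1 / (V - 2 * m) * Vr n w rho)) by (apply Rmult_le_compat_l; lra).
     lra. }
 assert (Hth2 : hG * c <= th) by (apply (proj2 Hth); auto).
 apply Rle_ge. apply Rmult_le_reg_r with hG; auto.
 unfold Rdiv. rewrite Rmult_assoc, Rinv_l by lra. lra.
Qed.
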